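(* For every $n\ge 2$, the set $\mathsf{BIAS}_n$ has exactly $(n-1)!$ elements.
   Context: An affine permutation of size $n$ is a bijection $w:\mathbb{Z}\to\mathbb{Z}$ with $w(i+n)=w(i)+n$ for all $i$ and $w(1)+\cdots+w(n)=\binom{n+1}{2}$; equivalently it is determined by its base window $[w_1,\dots,w_n]=[w(1),\dots,w(n)]$, and a sequence of integers is a base window iff its entries have distinct residues mod $n$ and sum to $\binom{n+1}{2}$. $\widetilde{S}_n^\circ$ denotes the set of such $w$ with $w_1<\cdots<w_n$. $\mathsf{BIAS}_n$ (the minimal abaci) is the set of $w\in\widetilde{S}_n^\circ$ with $w_{i+1}-w_i\in\{1,\dots,n-1\}$ for all $1\le i\le n-1$. *)

(* Defs.v *)
From mathcomp Require Import all_boot all_order all_algebra.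
Set Implicit Arguments. Unset Strict Implicit. Unset Printing Implicit Defensive.
Import Order.TTheory GRing.Theory Num.Theory.
Local Open Scope ring_scope.

(* An affine permutation of size n is identified with its base window
   [w_1; ...; w_n] : seq int. *)
Definition is_window (n : nat) (w : seq int) : bool :=
  [&& size w == n,
      uniq [seq (x %% (n%:Z))%Z | x <- w] &
      \sum_(x <- w) x == ('C(n.+1, 2))%:Z].

Definition gaps_ok (n : nat) (w : seq int) : bool :=
  sorted (fun a b : int => (1 <= b - a) && (b - a <= (n%:Z) - 1)) w.

Definition in_Sn_circ (n : nat) (w : seq int) : bool :=
  is_window n w && sorted (fun a b : int => a < b) w.

Definition in_BIAS (n : nat) (w : seq int) : bool :=
  in_Sn_circ n w && gaps_ok n w.

(* Main.v *)
Require Import Defs.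
From mathcomp Require Import all_boot all_order all_algebra ring lra zify.
Set Implicit Arguments. Unset Strict Implicit. Unset Printing Implicit Defensive.
Import Order.TTheory GRing.Theory Num.Theory.
Local Open Scope ring_scope.

Fixpoint mkw (N : int) (c p : int) (rs : seq int) : seq int :=
  if rs is x :: rs' then (c + modz (x - p) N) :: mkw N (c + modz (x - p) N) x rs' else [::].

Definition grel (N : int) (a b : int) := (1 <= b - a) && (b - a <= N - 1).

Lemma cong_dvd (N x y : int) : (N %| x - y)%Z -> modz x N = modz y N.
Proof. by move=> h; apply/eqP; rewrite eqz_mod_dvd. Qed.

Lemma modz_sub_dvd (N x : int) : (N %| modz x N - x)%Z.
Proof.
rewrite {2}(divz_eq x N).
have -> : modz x N - ((x %/ N)%Z * N + modz x N) = - ((x %/ N)%Z * N) by ring.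
by rewrite rpredN; apply: dvdz_mull; apply: dvdzz.
Qed.

Lemma size_mkw N c p rs : size (mkw N c p rs) = size rs.
Proof. by elim: rs c p => //= x rs IH c p; rewrite IH. Qed.

Lemma mkw_shift N c d p rs : mkw N (c + d) p rs = map (fun y => y + d) (mkw N c p rs).
Proof.
elim: rs c p => //= x rs IH c p.
have -> : c + d + modz (x - p) N = (c + modz (x - p) N) + d by rewrite addrAC.
by rewrite IH.
Qed.

Lemma mkw_mod N c p rs :
  map (fun y => modz (y - c + p) N) (mkw N c p rs) = map (fun x => modz x N) rs.
Proof.
elim: rs c p => //= x rs IH c p; congr (_ :: _).
  apply: cong_dvd.
  have -> : c + modz (x - p) N - c + p - x = modz (x - p) N - (x - p) by ring.
  exact: modz_sub_dvd.
rewrite -(IH (c + modz (x - p) N) x); apply: eq_map => y; apply: cong_dvd.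
have -> : y - c + p - (y - (c + modz (x - p) N) + x) = modz (x - p) N - (x - p) by ring.
exact: modz_sub_dvd.
Qed.

Lemma dvd_cong (N x y : int) : modz x N = modz y N -> (N %| x - y)%Z.
Proof. by move=> h; rewrite -eqz_mod_dvd; apply/eqP. Qed.

Lemma mod_bounds N x : 0 < N -> 0 <= modz x N < N.
Proof. by move=> hN; rewrite modz_ge0 ?ltz_pmod // gt_eqF. Qed.

Lemma mkw_path N c p rs : 0 < N -> uniq (p :: rs) -> all (fun x => 0 <= x < N) (p :: rs) ->
  path (grel N) c (mkw N c p rs).
Proof.
move=> hN; elim: rs c p => //= x rs IH c p /and3P[hp hx hu] /and3P[bp bx ba].
apply/andP; split; last first.
  by apply: IH; rewrite ?hu ?bx ?ba ?hx.
rewrite /grel; have -> : c + modz (x - p) N - c = modz (x - p) N by ring.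
have [b1 b2] := andP (mod_bounds (x - p) hN).
have hne : modz (x - p) N != 0.
  apply/eqP => h0.
  have hd : (N %| x - p)%Z.
    by have := modz_sub_dvd N (x - p); rewrite h0 sub0r rpredN.
  have := cong_dvd hd; rewrite !modz_small // => exp.
  by move: hp; rewrite inE -exp eqxx.
apply/andP; split; lia.
Qed.

Lemma mkw_back N ws c p w0 : path (grel N) c ws -> modz p N = modz (c - w0) N ->
  mkw N c p (map (fun y => modz (y - w0) N) ws) = ws.
Proof.
elim: ws c p => //= y ws IH c p /andP[/andP[g1 g2] hpth] hp.
have e : modz (modz (y - w0) N - p) N = y - c.
  rewrite -[RHS](@modz_small (y - c) N); last by apply/andP; split; lia.
  apply: cong_dvd.
  have -> : modz (y - w0) N - p - (y - c) =
     (modz (y - w0) N - (y - w0)) - (p - (c - w0)) by ring.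
  by rewrite rpredB ?modz_sub_dvd ?dvd_cong.
rewrite e; have -> : c + (y - c) = y by ring.
by rewrite IH // modz_mod.
Qed.

Lemma sum_shift (d : int) s :
  \sum_(y <- map (fun y => y + d) s) y = \sum_(y <- s) y + d *+ size s.
Proof.
elim: s => [|x s IH]; first by rewrite !big_nil.
by rewrite /= !big_cons IH mulrS; ring.
Qed.

Lemma sum_mod_dvd N s : (N %| \sum_(y <- s) y - \sum_(y <- s) modz y N)%Z.
Proof.
elim: s => [|x s IH]; first by rewrite !big_nil subrr dvdz0.
rewrite !big_cons.
have -> : x + \sum_(y <- s) y - (modz x N + \sum_(y <- s) modz y N) =
  (\sum_(y <- s) y - \sum_(y <- s) modz y N) - (modz x N - x) by ring.
by rewrite rpredB ?modz_sub_dvd.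
Qed.

Lemma sum_Posz (l : seq nat) : \sum_(x <- map Posz l) x = (\sum_(x <- l) x)%N%:Z.
Proof.
elim: l => [|x l IH]; first by rewrite !big_nil.
by rewrite /= !big_cons IH PoszD.
Qed.

Lemma uniq_map_comp (f g k : int -> int) s :
  (forall y, f y = k (g y)) -> uniq (map f s) -> uniq (map g s).
Proof.
move=> h; rewrite (eq_map h) (map_comp k g); exact: map_uniq.
Qed.

Definition Ln (n : nat) : seq int := map Posz (iota 1 n.-1).

Lemma uniq_Ln n : uniq (Ln n).
Proof. by rewrite map_inj_uniq ?iota_uniq // => x y []. Qed.

Lemma mem_Ln n (x : int) : (1 <= n)%N -> (x \in Ln n) = (0 < x < n%:Z).
Proof.
move=> hn; apply/mapP/idP.
  by case=> m; rewrite mem_iota => /andP[h1 h2] ->; apply/andP; split; lia.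
case: x => [m|m] /andP[h1 h2]; last by [].
by exists m => //; rewrite mem_iota; apply/andP; split; lia.
Qed.

Lemma sum_Ln n : (1 <= n)%N -> \sum_(x <- Ln n) x = ('C(n, 2))%:Z.
Proof.
move=> hn; rewrite sum_Posz -bin2_sum /index_iota subn0.
by case: n hn => // n _ /=; rewrite big_cons add0n.
Qed.

Lemma memP n r : (1 <= n)%N -> perm_eq r (Ln n) ->
  [/\ uniq (0 :: r), all (fun x => 0 <= x < n%:Z) (0 :: r), size r = n.-1 &
      \sum_(x <- r) x = ('C(n, 2))%:Z].
Proof.
move=> hn hp; split.
- rewrite /= (perm_uniq hp) uniq_Ln andbT (perm_mem hp) mem_Ln //.
- apply/allP => x; rewrite inE => /orP[/eqP->|]; first by apply/andP; split; lia.
  rewrite (perm_mem hp) mem_Ln // => /andP[h1 h2].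
  by apply/andP; split; lia.
- by rewrite (perm_size hp) size_map size_iota.
- by rewrite (perm_big _ hp) sum_Ln.
Qed.

Definition Fa (n : nat) (r : seq int) : int :=
  ((('C(n.+1, 2))%:Z - \sum_(y <- mkw n%:Z 0 0 r) y) %/ n%:Z)%Z.
Definition Fw (n : nat) (r : seq int) : seq int := Fa n r :: mkw n%:Z (Fa n r) 0 r.
Definition Gw (n : nat) (w : seq int) : seq int :=
  map (fun y => modz (y - head 0 w) n%:Z) (behead w).

Lemma mapmod_small N r : all (fun x => 0 <= x < N) r -> map (fun x => modz x N) r = r.
Proof. by move=> /allP h; apply: map_id_in => x /h; exact: modz_small. Qed.

Lemma mkw_modc N a r : all (fun x => 0 <= x < N) r ->
  map (fun y => modz (y - a) N) (mkw N a 0 r) = r.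
Proof.
move=> h; rewrite -[RHS](mapmod_small h) -(mkw_mod N a 0).
by apply: eq_map => y; rewrite addr0.
Qed.

Lemma FB n r : (2 <= n)%N -> perm_eq r (Ln n) -> Gw n (Fw n r) = r.
Proof.
move=> hn hp; have [_ hall _ _] := memP (ltnW hn) hp.
by rewrite /Gw /Fw /= mkw_modc //; move: hall => /andP[].
Qed.

Lemma binS2 n : 'C(n.+1, 2) = ('C(n, 2) + n)%N.
Proof. by rewrite binS bin1. Qed.

Lemma FA n r : (2 <= n)%N -> perm_eq r (Ln n) -> in_BIAS n (Fw n r).
Proof.
move=> hn hp; have [hu hall hsz hsum] := memP (ltnW hn) hp.
have hall' : all (fun x => 0 <= x < n%:Z) r by move: hall => /andP[].
have hN : 0 < n%:Z by rewrite ltz_nat; lia.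
set N := n%:Z in hN hall hall' *.
set M := mkw N 0 0 r.
have hMm : map (fun y => modz y N) M = r.
  by rewrite -[RHS](mkw_modc 0 hall'); apply: eq_map => y; rewrite subr0.
have hdiv : (N %| ('C(n.+1, 2))%:Z - \sum_(y <- M) y)%Z.
  have e : \sum_(y <- M) modz y N = \sum_(y <- map (fun y => modz y N) M) y by rewrite big_map.
  have := sum_mod_dvd N M; rewrite e hMm hsum => h.
  have -> : ('C(n.+1, 2))%:Z - \sum_(y <- M) y =
     N - (\sum_(y <- M) y - ('C(n, 2))%:Z) by rewrite binS2 PoszD /N; ring.
  by rewrite rpredB ?dvdzz.
have ha : Fa n r * N = ('C(n.+1, 2))%:Z - \sum_(y <- M) y by rewrite /Fa divzK.
set a := Fa n r in ha.
have hM : mkw N a 0 r = map (fun y => y + a) M by rewrite -mkw_shift add0r.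
have hpath : path (grel N) a (mkw N a 0 r) by apply: mkw_path.
rewrite /in_BIAS /in_Sn_circ /is_window /gaps_ok /Fw -/a.
apply/andP; split; last exact: hpath.
apply/andP; split; last first.
  by apply: sub_path hpath => x y /andP[h1 _]; lia.
apply/and3P; split.
- by rewrite /= size_mkw hsz; lia.
- apply: (@uniq_map_comp (fun y => modz (y - a) N) _ (fun z => modz (z - a) N)).
    move=> y; apply: cong_dvd.
    have -> : y - a - (modz y N - a) = - (modz y N - y) by ring.
    by rewrite rpredN modz_sub_dvd.
  by rewrite /= mkw_modc // subrr mod0z.
- rewrite big_cons hM sum_shift -/M /M size_mkw hsz.
  apply/eqP; rewrite -/M.
  have -> : a + (\sum_(y <- M) y + a *+ n.-1) = a * N + \sum_(y <- M) y.
    by rewrite /N -natz mulr_natr; case: (n) hn => // k _ /=; rewrite mulrS; ring.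
  by rewrite ha; ring.
Qed.

Lemma FC n w : (2 <= n)%N -> in_BIAS n w -> perm_eq (Gw n w) (Ln n) /\ Fw n (Gw n w) = w.
Proof.
move=> hn; rewrite /in_BIAS /in_Sn_circ /is_window /gaps_ok.
move=> /andP[/andP[/and3P[/eqP hsz hu /eqP hsum] _] hpath].
have hN : 0 < n%:Z by rewrite ltz_nat; lia.
case: w hsz hu hsum hpath => [|w0 ws] hsz hu hsum hpath; first by move: hsz hn => <-.
set N := n%:Z in hN hu hsum hpath *.
set r := Gw n (w0 :: ws).
have hr : r = map (fun y => modz (y - w0) N) ws by [].
have hu0 : uniq (0 :: r).
  have : uniq (map (fun y => modz (y - w0) N) (w0 :: ws)).
    apply: (@uniq_map_comp (fun y => modz y N) _ (fun z => modz (z + w0) N)) => // y.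
    apply: cong_dvd.
    have -> : y - (modz (y - w0) N + w0) = - (modz (y - w0) N - (y - w0)) by ring.
    by rewrite rpredN modz_sub_dvd.
  by rewrite /= subrr mod0z hr.
have hszr : size r = n.-1 by rewrite hr size_map -hsz.
have hp : perm_eq r (Ln n).
  move: hu0 => /= /andP[h0 hur].
  apply: uniq_perm => //; first exact: uniq_Ln.
  have [] := @uniq_min_size _ r (Ln n) hur.
  - move=> x hx; rewrite mem_Ln; last lia.
    have hx0 : x != 0 by apply: contraNneq h0 => <-.
    move: hx; rewrite hr => /mapP[y _ ex]; subst x.
    have := mod_bounds (y - w0) hN; move: hx0.
    move=> hne /andP[b1 b2]; apply/andP; split; lia.
  - by rewrite hszr size_map size_iota.
  by move=> _.
split => //.
have hback : mkw N w0 0 r = ws.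
  by rewrite hr mkw_back // subrr mod0z.
have hM : ws = map (fun y => y + w0) (mkw N 0 0 r).
  by rewrite -mkw_shift add0r hback.
have hFa : Fa n r = w0.
  rewrite /Fa -/N.
  have -> : ('C(n.+1, 2))%:Z - \sum_(y <- mkw N 0 0 r) y = w0 * N.
    rewrite -hsum big_cons hM sum_shift size_mkw hszr /N -natz mulr_natr.
    by case: (n) hn => // k _ /=; rewrite mulrS; ring.
  by rewrite mulzK // gt_eqF.
by rewrite /Fw hFa -/N hback.
Qed.

Theorem mainTheorem3 (n : nat) (hn : (2 <= n)%N) :
  exists s : seq (seq int),
    [/\ uniq s, size s = (n.-1)`! & forall w : seq int, (w \in s) = in_BIAS n w].
Proof.
exists (map (Fw n) (permutations (Ln n))); split.
- rewrite map_inj_in_uniq ?permutations_uniq // => r1 r2.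
  rewrite !mem_permutations => h1 h2 e.
  by rewrite -(FB hn h1) -(FB hn h2) e.
- by rewrite size_map size_permutations ?uniq_Ln // size_map size_iota.
- move=> w; apply/mapP/idP.
    by case=> r; rewrite mem_permutations => hr ->; apply: FA.
  move=> hw; have [hp e] := FC hn hw.
  by exists (Gw n w); rewrite ?mem_permutations.
Qed.
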